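(* Fix an sBS $k$, a time slot $t$, and $\epsilon>0$. Let $\hat{\mathbf P}_k^{(t)}$ be an estimate of $\mathbf P_k$ obtained either by the point estimator or by the Bayesian estimator, and let $(\mathbf u_t,\mathbf v_t)\in\arg\max_{(\mathbf u,\mathbf v)\in\mathcal C_{c,r}}\mathbf u^T\hat{\mathbf P}_k^{(t)}\mathbf v$. Let $\widehat{\Delta P}^{(t)}:=\mathbf P_k-\hat{\mathbf P}_k^{(t)}$ and let $\mathcal N_\epsilon$ be an $\epsilon$-cover of $\mathcal C_{c,r}$. Then $$\Pr\Big\{\sup_{(\mathbf u,\mathbf v)\in\mathcal C_{c,r}}\mathbf u^T\mathbf P_k\mathbf v-\mathbf u_t^T\mathbf P_k\mathbf v_t\ge\epsilon\Big\}\le|\mathcal N_\epsilon|\,\Pr\Big\{\|\widehat{\Delta P}^{(t)}\|_F\ge\frac{\epsilon}{4\kappa rc}\Big\}.$$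
   Context: Setting: a catalog of $F$ files $\{1,\dots,F\}$; time is slotted; in every slot each of $N$ users of a small base station (sBS) requests a file. For sBS $k$, the probability transition matrix (PTM) $\mathbf P_k\in[0,1]^{F\times F}$ has entries $(\mathbf P_k)_{ij}=p_{ij,k}$, the probability that a user at sBS $k$ requests file $i$ given that file $j$ is recommended; $\mathbf P_k$ does not change over time. For a cache size $c>0$ and a recommendation budget $r>0$, the strategy set is $\mathcal C_{c,r}=\{(\mathbf u,\mathbf v)\in[0,1]^F\times[0,1]^F:\mathbf u^T\mathbf 1\le c,\ \mathbf v^T\mathbf 1\le r\}$, where $u_i$ (resp. $v_j$) is the probability of caching file $i$ (resp. recommending file $j$); the average cache hit of $(\mathbf u,\mathbf v)$ at sBS $k$ is $\mathbf u^T\mathbf P_k\mathbf v$. $d_{ik}^{(s)}$ is the number of requests for file $i$ at sBS $k$ in slot $s$, and $v_{jk}^{s}\in\{0,1\}$ indicates whether file $j$ was recommended at sBS $k$ in slot $s$. Point estimator: $\hat p_{ij,k}^{(t)}=\frac{\sum_{s=0}^{t-1}d_{ik}^{(s)}v_{jk}^{s-1}}{N\sum_{s=0}^{t-1}v_{jk}^{s-1}}$. Bayesian estimator: for each $j$ independently, the column $(\hat p^{(t)}_{1j,k},\dots,\hat p^{(t)}_{Fj,k})$ is drawn from the Dirichlet distribution $\mathrm{Dir}(\alpha^{(t)}_{1jk},\dots,\alpha^{(t)}_{Fjk})$ with $\alpha^{(t)}_{ijk}=\sum_{q=1}^{t-1}d_{ik}^{(q)}v_{jk}^{q-1}$. An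 $\epsilon$-cover of $\mathcal C_{c,r}$ is a finite set $\mathcal N_\epsilon$ of pairs $(\mathbf x,\mathbf y)$ such that for every $(\mathbf u,\mathbf v)\in\mathcal C_{c,r}$ some $(\mathbf x,\mathbf y)\in\mathcal N_\epsilon$ satisfies $\|\mathbf u-\mathbf x\|_2\le\epsilon/8$ and $\|\mathbf v-\mathbf y\|_2\le\epsilon/8$; $|\mathcal N_\epsilon|$ is its cardinality. $\kappa>0$ is a fixed constant such that $|\mathbf x^T A\mathbf y|\le\kappa\|\mathbf x\|_1\|\mathbf y\|_1\|A\|_F$ for all vectors $\mathbf x,\mathbf y$ and matrices $A$. *)

(* Defs.v *)
From HB Require Import structures.
From mathcomp Require Import all_boot all_order all_algebra.
From mathcomp Require Import all_classical all_reals all_analysis.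
Set Implicit Arguments. Unset Strict Implicit. Unset Printing Implicit Defensive.
Import Order.TTheory GRing.Theory Num.Theory.
Local Open Scope ring_scope.

Definition bilin (R : realType) (F : nat) (x : 'cV[R]_F) (A : 'M[R]_F) (y : 'cV[R]_F) : R :=
  (x^T *m A *m y) 0 0.

Definition l1norm (R : realType) (F : nat) (x : 'cV[R]_F) : R := \sum_i `|x i 0|.
Definition l2norm (R : realType) (F : nat) (x : 'cV[R]_F) : R :=
  Num.sqrt (\sum_i x i 0 ^+ 2).
Definition frob (R : realType) (F : nat) (A : 'M[R]_F) : R :=
  Num.sqrt (\sum_i \sum_j A i j ^+ 2).

Definition inC (R : realType) (F : nat) (c r : R) (u v : 'cV[R]_F) : Prop :=
  (forall i, 0 <= u i 0 <= 1) /\ (forall j, 0 <= v j 0 <= 1) /\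
  \sum_i u i 0 <= c /\ \sum_j v j 0 <= r.

Definition supC (R : realType) (F : nat) (c r : R) (A : 'M[R]_F) : R :=
  sup [set z : R | exists u v, inC c r u v /\ z = bilin u A v].

Definition is_cover (R : realType) (F : nat) (c r eps : R)
    (N : seq ('cV[R]_F * 'cV[R]_F)) : Prop :=
  uniq N /\
  forall u v, inC c r u v ->
    exists2 xy, xy \in N & l2norm (u - xy.1) <= eps / 8 /\ l2norm (v - xy.2) <= eps / 8.

(* Main.v *)
Require Import Defs.
From HB Require Import structures.
From mathcomp Require Import all_boot all_order all_algebra.
From mathcomp Require Import all_classical all_reals all_analysis.
From mathcomp Require Import measurable_realfun.
From mathcomp Require Import ring lra.
Import Order.TTheory GRing.Theory Num.Theory.
Local Open Scope classical_set_scope.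
Local Open Scope ring_scope.

Lemma bilinE (R : realType) F (x : 'cV[R]_F) A y :
  bilin x A y = \sum_j (\sum_i x i 0 * A i j) * y j 0.
Proof.
rewrite /bilin !mxE; apply: eq_bigr => j _; rewrite !mxE; congr (_ * _).
by apply: eq_bigr => i _; rewrite !mxE.
Qed.

Lemma bilinB (R : realType) F (x : 'cV[R]_F) A B y :
  bilin x A y - bilin x B y = bilin x (A - B) y.
Proof. by rewrite /bilin mulmxBr mulmxBl !mxE. Qed.

Lemma meas_le (R : realType) d (T : measurableType d) (f : T -> R) a :
  measurable_fun setT f -> measurable [set w | a <= f w].
Proof.
move=> mf.
have := measurable_fun_ler (measurable_cst a) mf measurableT (Y := [set true]) I.
by rewrite setTI.
Qed.

Lemma l1le (R : realType) F (c r : R) (u v : 'cV[R]_F) : inC c r u v ->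
  l1norm u <= c /\ l1norm v <= r.
Proof.
move=> [hu [hv [su sv]]]; split.
  by rewrite /l1norm (eq_bigr (fun i => u i 0)) // => i _; rewrite ger0_norm //; case/andP: (hu i).
by rewrite /l1norm (eq_bigr (fun i => v i 0)) // => i _; rewrite ger0_norm //; case/andP: (hv i).
Qed.

Lemma gap_bound (R : realType) (F : nat) (c r kappa : R) (Pk Ph : 'M[R]_F)
   (ut vt : 'cV[R]_F) :
  0 < c -> 0 < r -> 0 < kappa ->
  (forall (x y : 'cV[R]_F) (A : 'M[R]_F),
      `|bilin x A y| <= kappa * l1norm x * l1norm y * frob A) ->
  inC c r ut vt ->
  (forall u v, inC c r u v -> bilin u Ph v <= bilin ut Ph vt) ->
  supC c r Pk - bilin ut Pk vt <= 2 * (kappa * c * r * frob (Pk - Ph)).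
Proof.
move=> c0 r0 k0 hk Ct opt.
have f0 : 0 <= frob (Pk - Ph) by rewrite /frob sqrtr_ge0.
have key : forall u v, inC c r u v ->
   `|bilin u (Pk - Ph) v| <= kappa * c * r * frob (Pk - Ph).
  move=> u v /l1le [lu lv]; apply: le_trans (hk _ _ _) _.
  apply: ler_wpM2r => //; rewrite -mulrA -[X in _ <= X]mulrA.
  apply: ler_wpM2l; first exact: ltW.
  apply: ler_pM => //; rewrite /l1norm; apply: sumr_ge0 => i _; exact: normr_ge0.
rewrite lerBlDl; apply: ge_sup.
  exists (bilin 0 Pk 0), 0, 0; split => //; split.
    by move=> i; rewrite mxE lexx ler01.
  split; first by move=> i; rewrite mxE lexx ler01.
  by rewrite !big1 ?ltW // => i _; rewrite mxE.
move=> _ [u [v [Cuv ->]]].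
have e1 := @bilinB R F u Pk Ph v.
have e2 := @bilinB R F ut Pk Ph vt.
have h1 := opt u v Cuv.
have k1 := key u v Cuv; have k2 := key ut vt Ct.
move: k1 k2 => /ler_normlP [_ k1] /ler_normlP [k2 _].
lra.
Qed.

Theorem theorem1 (R : realType) (d : measure_display) (T : measurableType d)
    (Pr : probability T R) (F : nat) (c r eps kappa : R)
    (Pk : 'M[R]_F) (Phat : T -> 'M[R]_F) (ut vt : T -> 'cV[R]_F)
    (N : seq ('cV[R]_F * 'cV[R]_F)) :
  0 < c -> 0 < r -> 0 < eps -> 0 < kappa ->
  (forall (x y : 'cV[R]_F) (A : 'M[R]_F),
      `|bilin x A y| <= kappa * l1norm x * l1norm y * frob A) ->
  (forall i j, 0 <= Pk i j <= 1) ->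
  (forall i j, measurable_fun setT (fun w => Phat w i j)) ->
  (forall i, measurable_fun setT (fun w => ut w i 0)) ->
  (forall i, measurable_fun setT (fun w => vt w i 0)) ->
  (forall w, inC c r (ut w) (vt w) /\
     forall u v, inC c r u v -> bilin u (Phat w) v <= bilin (ut w) (Phat w) (vt w)) ->
  is_cover c r eps N ->
  (Pr [set w | (eps <= supC c r Pk - bilin (ut w) Pk (vt w))%R] <=
   (size N)%:R%:E *
     Pr [set w | (eps / (4 * kappa * r * c) <= frob (Pk - Phat w))%R])%E.
Proof.
move=> c0 r0 e0 k0 hk _ mP mu mv hopt [_ cov].
have N1 : (1 <= size N)%N.
  have C0 : inC c r (0 : 'cV[R]_F) 0.
    split; first by move=> i; rewrite mxE lexx ler01.
    split; first by move=> i; rewrite mxE lexx ler01.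
    by rewrite !big1 ?ltW // => i _; rewrite mxE.
  have [xy + _] := cov _ _ C0.
  by case: N {cov} => [|? ?].
have mA : measurable [set w | eps <= supC c r Pk - bilin (ut w) Pk (vt w)].
  apply: meas_le; apply: (measurable_funB (measurable_cst _)).
  under eq_fun do rewrite bilinE.
  apply: measurable_sum => j; apply: measurable_funM => //.
  apply: measurable_sum => i; apply: measurable_funM => //; exact: measurable_cst.
have mB : measurable [set w | eps / (4 * kappa * r * c) <= frob (Pk - Phat w)].
  apply: meas_le; apply: measurableT_comp; first exact: (continuous_measurable_fun (@sqrt_continuous R)).
  apply: measurable_sum => i; apply: measurable_sum => j.
  under eq_fun do rewrite !mxE.
  apply: measurable_funX; exact: (measurable_funB (measurable_cst (Pk i j)) (mP i j)).
have sub : [set w | eps <= supC c r Pk - bilin (ut w) Pk (vt w)] `<=`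
           [set w | eps / (4 * kappa * r * c) <= frob (Pk - Phat w)].
  move=> w /= hw; have [Ct opt] := hopt w.
  have := @gap_bound R F c r kappa Pk (Phat w) (ut w) (vt w) c0 r0 k0 hk Ct opt.
  have f0 : 0 <= frob (Pk - Phat w) by rewrite /frob sqrtr_ge0.
  move=> hb; rewrite ler_pdivrMr; last by rewrite !mulr_gt0.
  have : eps <= 2 * (kappa * c * r * frob (Pk - Phat w)) by apply: le_trans hb.
  have p : 0 <= kappa * c * r * frob (Pk - Phat w) by rewrite !mulr_ge0 // ltW.
  move=> h.
  rewrite (_ : frob (Pk - Phat w) * (4 * kappa * r * c) =
               4 * (kappa * c * r * frob (Pk - Phat w))); last by ring.
  lra.
apply: le_trans (le_measure _ _ _ sub) _; rewrite ?inE //.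
rewrite -[X in (X <= _)%E]mul1e; apply: lee_wpmul2r; first exact: measure_ge0.
by rewrite lee_fin ler1n.
Qed.
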